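(* On $H_n\setminus\{0\}$, let $\rho=(|z|^4+t^2)^{1/4}$. The dilations $\tau_a(z,t)=(az,a^2t)$, $a>0$, and the CR inversion $(z,t)\mapsto(z^*,t^* )$ with $z^*=z/w$, $t^*=-t/|w|^2$, $w=t+i|z|^2$, are CR automorphisms of $H_n\setminus\{0\}$ which preserve the contact form $\Theta/\rho^2$. Moreover, the Tanaka–Webster scalar curvature of $\Theta/\rho^2$ is $$R_{\Theta/\rho^2}=\frac{n(n+1)|z|^2}{2\rho^2},$$ in particular it is $\ge 0$ everywhere and $>0$ wherever $z\neq 0$.
   Context: $H_n=\mathbb{C}^n\times\mathbb{R}$ with coordinates $(z,t)$, $z=(z^1,\dots,z^n)$, is the Heisenberg group with its standard CR structure and standard contact form $\Theta=dt+i\sum_{\alpha=1}^n(z^\alpha dz^{\bar\alpha}-z^{\bar\alpha}dz^\alpha)$, for which the Tanaka–Webster scalar curvature vanishes. Curvature is normalized as in Jerison–Lee: if $\tilde\theta=u^{2/n}\theta$ with $u>0$, then $-(2+\tfrac2n)\Delta_b u+R_\theta u=R_{\tilde\theta}u^{(n+2)/n}$, where $\Delta_b$ is the sublaplacian of $\theta$. *)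

(* Defs.v *)
From Stdlib Require Import Reals.
Open Scope R_scope.

(* Points (and tangent vectors) of H_n = C^n x R, in real coordinates
   z^alpha = x_alpha + i y_alpha (alpha = 0..n-1), t.  Points of H_n are the
   records whose x,y components vanish for indices >= n. *)
Record pt := mkpt { px : nat -> R; py : nat -> R; ptt : R }.

Fixpoint rsum (n : nat) (f : nat -> R) : R :=
  match n with O => 0 | S m => rsum m f + f m end.

Definition in_H (n : nat) (p : pt) : Prop :=
  forall i, (n <= i)%nat -> px p i = 0 /\ py p i = 0.

Definition origin : pt := mkpt (fun _ => 0) (fun _ => 0) 0.

Definition Hstar (n : nat) (p : pt) : Prop := in_H n p /\ p <> origin.

Definition padd (p q : pt) : pt :=
  mkpt (fun i => px p i + px q i) (fun i => py p i + py q i) (ptt p + ptt q).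
Definition pscale (s : R) (p : pt) : pt :=
  mkpt (fun i => s * px p i) (fun i => s * py p i) (s * ptt p).

Inductive cidx := CX (i : nat) | CY (i : nat) | CT.
Definition cidx_ok (n : nat) (c : cidx) : Prop :=
  match c with CX i => (i < n)%nat | CY i => (i < n)%nat | CT => True end.
Definition coord (p : pt) (c : cidx) : R :=
  match c with CX i => px p i | CY i => py p i | CT => ptt p end.
Definition ebasis (c : cidx) : pt :=
  match c with
  | CX i => mkpt (fun j => if Nat.eqb j i then 1 else 0) (fun _ => 0) 0
  | CY i => mkpt (fun _ => 0) (fun j => if Nat.eqb j i then 1 else 0) 0
  | CT => mkpt (fun _ => 0) (fun _ => 0) 1
  end.

Definition zsq (n : nat) (p : pt) : R := rsum n (fun i => px p i ^ 2 + py p i ^ 2).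
Definition rho (n : nat) (p : pt) : R := sqrt (sqrt (zsq n p ^ 2 + ptt p ^ 2)).

Definition dist (n : nat) (p q : pt) : R :=
  rsum n (fun i => Rabs (px p i - px q i) + Rabs (py p i - py q i))
  + Rabs (ptt p - ptt q).
Definition cont_on (n : nat) (U : pt -> Prop) (f : pt -> R) : Prop :=
  forall p, U p -> forall eps, eps > 0 -> exists d, d > 0 /\
    forall q, U q -> dist n p q < d -> Rabs (f q - f p) < eps.

Definition has_dderiv (f : pt -> R) (p v : pt) (l : R) : Prop :=
  derivable_pt_lim (fun s => f (padd p (pscale s v))) 0 l.

Fixpoint Ck (n k : nat) (U : pt -> Prop) (f : pt -> R) : Prop :=
  match k with
  | O => cont_on n U f
  | S k' => cont_on n U f /\
      forall c, cidx_ok n c -> exists g : pt -> R,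
        (forall p, U p -> has_dderiv f p (ebasis c) (g p)) /\ Ck n k' U g
  end.
Definition smooth_on (n : nat) (U : pt -> Prop) (f : pt -> R) : Prop :=
  forall k, Ck n k U f.
Definition smooth_map (n : nat) (U : pt -> Prop) (F : pt -> pt) : Prop :=
  forall c, cidx_ok n c -> smooth_on n U (fun q => coord (F q) c).

Definition has_dmap (n : nat) (F : pt -> pt) (p v w : pt) : Prop :=
  in_H n w /\ forall c, cidx_ok n c ->
    has_dderiv (fun q => coord (F q) c) p v (coord w c).

(* Theta = dt + i sum (z dz̄ - z̄ dz) = dt + 2 sum (x dy - y dx) *)
Definition Theta (n : nat) (p v : pt) : R :=
  ptt v + 2 * rsum n (fun i => px p i * py v i - py p i * px v i).

(* Complex structure J on ker Theta_p: the CR structure T^{1,0} is spanned by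
   Z_a = d/dz^a + i z̄^a d/dt = (X_a - i Y_a)/2, X_a = d/dx_a + 2 y_a d/dt,
   Y_a = d/dy_a - 2 x_a d/dt, and J X_a = Y_a, J Y_a = - X_a. *)
Definition Jmap (n : nat) (p v : pt) : pt :=
  mkpt (fun i => - py v i) (fun i => px v i)
       (-2 * rsum n (fun i => px p i * px v i + py p i * py v i)).

Definition CR_aut (n : nat) (F : pt -> pt) : Prop :=
  let U := Hstar n in
  (exists G : pt -> pt,
     (forall p, U p -> U (F p)) /\ (forall p, U p -> U (G p)) /\
     (forall p, U p -> G (F p) = p) /\ (forall p, U p -> F (G p) = p) /\
     smooth_map n U F /\ smooth_map n U G) /\
  (forall p v w, U p -> in_H n v -> Theta n p v = 0 -> has_dmap n F p v w ->
     Theta n (F p) w = 0 /\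
     forall w', has_dmap n F p (Jmap n p v) w' -> w' = Jmap n (F p) w).

Definition preserves_form (n : nat) (F : pt -> pt) : Prop :=
  forall p v w, Hstar n p -> in_H n v -> has_dmap n F p v w ->
    Theta n (F p) w / rho n (F p) ^ 2 = Theta n p v / rho n p ^ 2.

Definition dil (a : R) (p : pt) : pt :=
  mkpt (fun i => a * px p i) (fun i => a * py p i) (a ^ 2 * ptt p).
(* z* = z / w, t* = -t/|w|^2, w = t + i|z|^2, |w|^2 = t^2 + |z|^4 *)
Definition cr_inv (n : nat) (p : pt) : pt :=
  let s := zsq n p in let t := ptt p in let W := t ^ 2 + s ^ 2 in
  mkpt (fun i => (px p i * t + py p i * s) / W)
       (fun i => (py p i * t - px p i * s) / W)
       (- t / W).

(* Sublaplacian of Theta: Delta_b u = (1/4) sum_a (X_a X_a u + Y_a Y_a u)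
   (= sum_{a} h^{a b̄}(u_{a b̄} + u_{b̄ a})/2... i.e. (1/2) sum (Z_a Z_ā + Z_ā Z_a) u,
   with Levi form h_{a b̄} = 2 delta). *)
Definition Xv (p : pt) (a : nat) : pt := padd (ebasis (CX a)) (pscale (2 * py p a) (ebasis CT)).
Definition Yv (p : pt) (a : nat) : pt := padd (ebasis (CY a)) (pscale (-2 * px p a) (ebasis CT)).

Definition is_sublap (n : nat) (U : pt -> Prop) (u L : pt -> R) : Prop :=
  exists gx gy hx hy : nat -> pt -> R,
    forall p, U p ->
      (forall a, (a < n)%nat ->
         has_dderiv u p (Xv p a) (gx a p) /\ has_dderiv u p (Yv p a) (gy a p) /\
         has_dderiv (gx a) p (Xv p a) (hx a p) /\ has_dderiv (gy a) p (Yv p a) (hy a p)) /\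
      L p = / 4 * rsum n (fun a => hx a p + hy a p).

(* Tanaka-Webster scalar curvature Rc of u^{2/n} Theta (u > 0) on U, via the
   Jerison-Lee transformation law with R_Theta = 0:
   -(2+2/n) Delta_b u = Rc u^{(n+2)/n}. *)
Definition TW_scal_conf (n : nat) (U : pt -> Prop) (u Rc : pt -> R) : Prop :=
  exists L, is_sublap n U u L /\
    forall p, U p ->
      - (2 + 2 / INR n) * L p = Rc p * Rpower (u p) ((INR n + 2) / INR n).

(* Main.v *)
Require Import Defs.
From Stdlib Require Import Reals Lra Lia Psatz FunctionalExtensionality.
Open Scope R_scope.

Lemma padd0 p v : padd p (pscale 0 v) = p.
Proof. destruct p; unfold padd, pscale; simpl; f_equal; try (apply functional_extensionality; intro); ring. Qed.

Lemma dpl_ext f g x l : (forall y, f y = g y) -> derivable_pt_lim f x l -> derivable_pt_lim g x l.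
Proof. intros H D eps He. destruct (D eps He) as [d Hd]. exists d. intros h h0 hd. rewrite <- !H. auto. Qed.

Lemma dpl_eq f x l l' : l = l' -> derivable_pt_lim f x l -> derivable_pt_lim f x l'.
Proof. intros ->; auto. Qed.

Lemma dd_ext f g p v l : (forall q, f q = g q) -> has_dderiv f p v l -> has_dderiv g p v l.
Proof. unfold has_dderiv; intros H; apply dpl_ext; intros; apply H. Qed.

Lemma dd_eq f p v l l' : l = l' -> has_dderiv f p v l -> has_dderiv f p v l'.
Proof. intros ->; auto. Qed.

Lemma dpl_lin a b x : derivable_pt_lim (fun s => a + s * b) x b.
Proof.
  apply dpl_eq with (0 + b * 1). ring.
  apply dpl_ext with (fct_cte a + mult_real_fct b id)%F.
  intros; unfold fct_cte, mult_real_fct, plus_fct, id; ring.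
  apply derivable_pt_lim_plus. apply derivable_pt_lim_const.
  apply derivable_pt_lim_scal, derivable_pt_lim_id.
Qed.

Lemma dd_const c p v : has_dderiv (fun _ => c) p v 0.
Proof. unfold has_dderiv. apply dpl_ext with (fct_cte c). reflexivity. apply derivable_pt_lim_const. Qed.

Lemma dd_px i p v : has_dderiv (fun q => px q i) p v (px v i).
Proof. unfold has_dderiv; simpl. apply dpl_lin. Qed.
Lemma dd_py i p v : has_dderiv (fun q => py q i) p v (py v i).
Proof. unfold has_dderiv; simpl. apply dpl_lin. Qed.
Lemma dd_pt p v : has_dderiv (fun q => ptt q) p v (ptt v).
Proof. unfold has_dderiv; simpl. apply dpl_lin. Qed.

Lemma dd_plus f g p v a b : has_dderiv f p v a -> has_dderiv g p v b ->
  has_dderiv (fun q => f q + g q) p v (a + b).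
Proof.
  unfold has_dderiv; intros Hf Hg.
  eapply dpl_ext; [|apply (derivable_pt_lim_plus _ _ _ _ _ Hf Hg)].
  intros; reflexivity.
Qed.

Lemma dd_mult f g p v a b : has_dderiv f p v a -> has_dderiv g p v b ->
  has_dderiv (fun q => f q * g q) p v (a * g p + f p * b).
Proof.
  unfold has_dderiv; intros Hf Hg.
  pose proof (derivable_pt_lim_mult _ _ _ _ _ Hf Hg) as H. cbv beta in H.
  rewrite padd0 in H.
  eapply dpl_ext; [|apply H]. intros; reflexivity.
Qed.

Lemma dd_inv f p v a : f p <> 0 -> has_dderiv f p v a ->
  has_dderiv (fun q => / f q) p v (- a / (f p) ^ 2).
Proof.
  unfold has_dderiv; intros Hn Hf.
  assert (H0 : (fun s => f (padd p (pscale s v))) 0 <> 0) by (cbv beta; rewrite padd0; auto).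
  pose proof (derivable_pt_lim_div _ _ _ _ _ (derivable_pt_lim_const 1 0) Hf H0) as H.
  cbv beta in H. unfold fct_cte in H. rewrite padd0 in H.
  eapply dpl_eq; [|eapply dpl_ext; [|apply H]].
  unfold Rsqr; field; auto.
  intros; unfold div_fct, fct_cte; unfold Rdiv; ring.
Qed.

Lemma cont_comp2 n U f g h : cont_on n U f -> cont_on n U g ->
  (forall a0 b0 eps, eps > 0 -> exists d, d > 0 /\ forall a b, Rabs (a - a0) < d -> Rabs (b - b0) < d ->
       Rabs (h a b - h a0 b0) < eps) ->
  cont_on n U (fun q => h (f q) (g q)).
Proof.
  intros Hf Hg Hh p Up eps He.
  destruct (Hh (f p) (g p) eps He) as [d [Hd Hd']].
  destruct (Hf p Up d Hd) as [d1 [Hd1 H1]].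
  destruct (Hg p Up d Hd) as [d2 [Hd2 H2]].
  exists (Rmin d1 d2); split. apply Rmin_pos; auto.
  intros q Uq Hq. apply Hd'.
  apply H1; auto. eapply Rlt_le_trans; [apply Hq| apply Rmin_l].
  apply H2; auto. eapply Rlt_le_trans; [apply Hq| apply Rmin_r].
Qed.

Lemma cont_comp1 n U f h : cont_on n U f ->
  (forall p, U p -> forall eps, eps > 0 -> exists d, d > 0 /\ forall a, Rabs (a - f p) < d ->
       Rabs (h a - h (f p)) < eps) ->
  cont_on n U (fun q => h (f q)).
Proof.
  intros Hf Hh p Up eps He.
  destruct (Hh p Up eps He) as [d [Hd Hd']].
  destruct (Hf p Up d Hd) as [d1 [Hd1 H1]].
  exists d1; split; auto.
Qed.

Lemma h_plus a0 b0 eps : eps > 0 -> exists d, d > 0 /\ forall a b, Rabs (a - a0) < d -> Rabs (b - b0) < d ->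
       Rabs ((a + b) - (a0 + b0)) < eps.
Proof.
  intros He; exists (eps/2); split; [lra|]. intros a b Ha Hb.
  replace (a + b - (a0 + b0)) with ((a - a0) + (b - b0)) by ring.
  eapply Rle_lt_trans; [apply Rabs_triang|]. lra.
Qed.

Lemma h_mult a0 b0 eps : eps > 0 -> exists d, d > 0 /\ forall a b, Rabs (a - a0) < d -> Rabs (b - b0) < d ->
       Rabs ((a * b) - (a0 * b0)) < eps.
Proof.
  intros He.
  set (K := 1 + Rabs a0 + Rabs b0).
  assert (HK : K >= 1) by (unfold K; pose proof (Rabs_pos a0); pose proof (Rabs_pos b0); lra).
  exists (Rmin 1 (eps / K)); split.
  apply Rmin_pos; [lra| apply Rdiv_lt_0_compat; lra].
  intros a b Ha Hb.
  assert (d1 : Rabs (a - a0) < 1) by (eapply Rlt_le_trans; [apply Ha|apply Rmin_l]).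
  assert (d2 : Rabs (b - b0) < 1) by (eapply Rlt_le_trans; [apply Hb|apply Rmin_l]).
  assert (e1 : Rabs (a - a0) < eps / K) by (eapply Rlt_le_trans; [apply Ha|apply Rmin_r]).
  assert (e2 : Rabs (b - b0) < eps / K) by (eapply Rlt_le_trans; [apply Hb|apply Rmin_r]).
  replace (a * b - a0 * b0) with ((a - a0) * (b - b0) + a0 * (b - b0) + b0 * (a - a0)) by ring.
  eapply Rle_lt_trans; [apply Rabs_triang|].
  eapply Rle_lt_trans; [apply Rplus_le_compat_r, Rabs_triang|].
  rewrite !Rabs_mult.
  set (u := Rabs (a - a0)) in *. set (w := Rabs (b - b0)) in *.
  assert (0 <= u) by apply Rabs_pos. assert (0 <= w) by apply Rabs_pos.
  pose proof (Rabs_pos a0). pose proof (Rabs_pos b0).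
  assert (Hm : Rmin u w <= u) by apply Rmin_l.
  assert (u * w <= Rmax u w) by (destruct (Rle_dec u w); [rewrite Rmax_right; nra|rewrite Rmax_left; nra]).
  assert (Rmax u w < eps / K) by (apply Rmax_lub_lt; auto).
  assert (Rabs a0 * w <= Rabs a0 * Rmax u w) by (apply Rmult_le_compat_l; auto; apply Rmax_r).
  assert (Rabs b0 * u <= Rabs b0 * Rmax u w) by (apply Rmult_le_compat_l; auto; apply Rmax_l).
  assert (K * (eps / K) = eps) by (field; lra).
  assert (0 <= Rmax u w) by (eapply Rle_trans; [|apply Rmax_l]; auto).
  unfold K in *. nra.
Qed.

Lemma h_inv p0 eps : p0 <> 0 -> eps > 0 -> exists d, d > 0 /\ forall a, Rabs (a - p0) < d ->
       Rabs (/ a - / p0) < eps.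
Proof.
  intros Hp He.
  assert (C : continuity_pt (/ id) p0) by (apply continuity_pt_inv; [apply derivable_continuous_pt, derivable_pt_id| auto]).
  destruct (C eps He) as [d [Hd H]]. exists d; split; auto.
  intros a Ha. destruct (Req_dec a p0) as [->|Hne].
  unfold Rminus; rewrite Rplus_opp_r, Rabs_R0; auto.
  apply (H a). split. split; auto. exact I. auto.
Qed.

Lemma rsum_nonneg m f : (forall i, 0 <= f i) -> 0 <= rsum m f.
Proof. intros H; induction m; simpl; [lra| specialize (H m); lra]. Qed.

Lemma rsum_ge m f i : (forall j, 0 <= f j) -> (i < m)%nat -> f i <= rsum m f.
Proof.
  intros H; induction m; intros Hi; [lia|]. simpl.
  destruct (Nat.eq_dec i m) as [->|Hne].
  pose proof (rsum_nonneg m f H); lra.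
  assert (i < m)%nat by lia. specialize (IHm H0). specialize (H m). lra.
Qed.

Lemma dist_px n p q i : (i < n)%nat -> Rabs (px q i - px p i) <= Defs.dist n p q.
Proof.
  intros Hi; unfold Defs.dist.
  pose proof (rsum_ge n (fun i => Rabs (px p i - px q i) + Rabs (py p i - py q i)) i
    ltac:(intros j; pose proof (Rabs_pos (px p j - px q j)); pose proof (Rabs_pos (py p j - py q j)); lra) Hi).
  cbv beta in H. rewrite Rabs_minus_sym. pose proof (Rabs_pos (py p i - py q i)). pose proof (Rabs_pos (ptt p - ptt q)). lra.
Qed.
Lemma dist_py n p q i : (i < n)%nat -> Rabs (py q i - py p i) <= Defs.dist n p q.
Proof.
  intros Hi; unfold Defs.dist.
  pose proof (rsum_ge n (fun i => Rabs (px p i - px q i) + Rabs (py p i - py q i)) i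
    ltac:(intros j; pose proof (Rabs_pos (px p j - px q j)); pose proof (Rabs_pos (py p j - py q j)); lra) Hi).
  cbv beta in H. rewrite Rabs_minus_sym. pose proof (Rabs_pos (px p i - px q i)). pose proof (Rabs_pos (ptt p - ptt q)). lra.
Qed.
Lemma dist_pt n p q : Rabs (ptt q - ptt p) <= Defs.dist n p q.
Proof.
  unfold Defs.dist. 
  pose proof (rsum_nonneg n (fun i => Rabs (px p i - px q i) + Rabs (py p i - py q i))
    ltac:(intros j; pose proof (Rabs_pos (px p j - px q j)); pose proof (Rabs_pos (py p j - py q j)); lra)).
  rewrite Rabs_minus_sym. lra.
Qed.

Lemma cont_coord n U c : cidx_ok n c -> cont_on n U (fun q => coord q c).
Proof.
  intros Hc p Up eps He. exists eps; split; auto. intros q Uq Hq.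
  destruct c; simpl in *.
  eapply Rle_lt_trans; [apply dist_px|]; eauto.
  eapply Rle_lt_trans; [apply dist_py|]; eauto.
  eapply Rle_lt_trans; [apply dist_pt|]; eauto.
Qed.

Lemma cont_const n U c : cont_on n U (fun _ => c).
Proof. intros p Up eps He. exists 1; split; [lra|]. intros. unfold Rminus; rewrite Rplus_opp_r, Rabs_R0; auto. Qed.

Lemma cont_plus n U f g : cont_on n U f -> cont_on n U g -> cont_on n U (fun q => f q + g q).
Proof. intros; apply (cont_comp2 n U f g (fun a b => a + b)); auto. intros; apply h_plus; auto. Qed.
Lemma cont_mult n U f g : cont_on n U f -> cont_on n U g -> cont_on n U (fun q => f q * g q).
Proof. intros; apply (cont_comp2 n U f g (fun a b => a * b)); auto. intros; apply h_mult; auto. Qed.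
Lemma cont_inv n U f : (forall p, U p -> f p <> 0) -> cont_on n U f -> cont_on n U (fun q => / f q).
Proof. intros Hn Hc; apply (cont_comp1 n U f (fun a => / a)); auto. intros; apply h_inv; auto. Qed.

Lemma Ck_cont n k U f : Ck n k U f -> cont_on n U f.
Proof. destruct k; simpl; tauto. Qed.

Lemma Ck_mono n k U f : Ck n (S k) U f -> Ck n k U f.
Proof. revert f; induction k; intros f H; simpl in *. tauto.
  destruct H as [Hc Hd]; split; auto. intros c hc; destruct (Hd c hc) as [g [Hg Hk]]; exists g; split; auto. Qed.

Lemma Ck_const n k U c : Ck n k U (fun _ => c).
Proof. revert c; induction k; intros c; simpl. apply cont_const. split. apply cont_const. intros; exists (fun _ => 0); split; auto. intros; apply dd_const. Qed.

Lemma Ck_coord n k U c : cidx_ok n c -> Ck n k U (fun q => coord q c).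
Proof. intros Hc. destruct k; simpl. apply cont_coord; auto. split. apply cont_coord; auto. intros c' _. exists (fun _ => coord (ebasis c') c). split. intros; destruct c; simpl; [apply dd_px|apply dd_py|apply dd_pt]. apply Ck_const. Qed.

Lemma Ck_plus n k U : forall f g, Ck n k U f -> Ck n k U g -> Ck n k U (fun q => f q + g q).
Proof.
  induction k; intros f g Hf Hg; simpl in *. apply cont_plus; auto.
  destruct Hf as [cf df]; destruct Hg as [cg dg]. split. apply cont_plus; auto.
  intros c hc. destruct (df c hc) as [f' [Hf' Cf']]. destruct (dg c hc) as [g' [Hg' Cg']].
  exists (fun q => f' q + g' q); split; [intros; apply dd_plus; auto | apply IHk; auto].
Qed.

Lemma Ck_mult n k U : forall f g, Ck n k U f -> Ck n k U g -> Ck n k U (fun q => f q * g q).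
Proof.
  induction k; intros f g Hf Hg. simpl in *. apply cont_mult; auto.
  pose proof (Ck_mono _ _ _ _ Hf) as Mf. pose proof (Ck_mono _ _ _ _ Hg) as Mg.
  simpl in Hf, Hg |- *.
  destruct Hf as [cf df]; destruct Hg as [cg dg]. split. apply cont_mult; auto.
  intros c hc. destruct (df c hc) as [f' [Hf' Cf']]. destruct (dg c hc) as [g' [Hg' Cg']].
  exists (fun q => f' q * g q + f q * g' q); split; [intros; apply dd_mult; auto | apply Ck_plus; apply IHk; auto].
Qed.

Lemma Ck_inv n k U : forall f, (forall p, U p -> f p <> 0) -> Ck n k U f -> Ck n k U (fun q => / f q).
Proof.
  induction k; intros f Hn Hf. simpl in *. apply cont_inv; auto.
  pose proof (Ck_mono _ _ _ _ Hf) as Mf.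
  simpl in Hf |- *.
  destruct Hf as [cf df]. split. apply cont_inv; auto.
  intros c hc. destruct (df c hc) as [f' [Hf' Cf']].
  exists (fun q => (-1 * f' q) * (/ f q * / f q)); split.
  intros p Up. eapply dd_eq; [|apply dd_inv; auto]. field; auto.
  apply Ck_mult. apply Ck_mult; auto. apply Ck_const. apply Ck_mult; apply IHk; auto.
Qed.

Lemma Ck_rsum n k U m (f : nat -> pt -> R) : (forall i, (i < m)%nat -> Ck n k U (f i)) ->
  Ck n k U (fun q => rsum m (fun i => f i q)).
Proof.
  induction m; intros H; simpl. apply Ck_const.
  apply Ck_plus. apply IHm; intros; apply H; lia. apply H; lia.
Qed.

Lemma dd_rsum m (f : nat -> pt -> R) a p v : (forall i, (i < m)%nat -> has_dderiv (f i) p v (a i)) ->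
  has_dderiv (fun q => rsum m (fun i => f i q)) p v (rsum m a).
Proof.
  induction m; intros H; simpl. apply dd_const.
  apply dd_plus. apply IHm; intros; apply H; lia. apply H; lia.
Qed.

Lemma dd_scal c f p v a : has_dderiv f p v a -> has_dderiv (fun q => c * f q) p v (c * a).
Proof. intros H. eapply dd_eq; [|apply (dd_mult (fun _ => c) f); [apply dd_const|apply H]]. ring. Qed.

Lemma dd_unique f p v l1 l2 : has_dderiv f p v l1 -> has_dderiv f p v l2 -> l1 = l2.
Proof. apply uniqueness_limite. Qed.

Lemma rsum_ext m f g : (forall i, (i < m)%nat -> f i = g i) -> rsum m f = rsum m g.
Proof. induction m; intros H; simpl; auto. rewrite IHm, H; auto; intros; try apply H; lia. Qed.
Lemma rsum_plus m f g : rsum m (fun i => f i + g i) = rsum m f + rsum m g.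
Proof. induction m; simpl; [ring| rewrite IHm; ring]. Qed.
Lemma rsum_scal m c f : rsum m (fun i => c * f i) = c * rsum m f.
Proof. induction m; simpl; [ring| rewrite IHm; ring]. Qed.
Lemma rsum_minus m f g : rsum m (fun i => f i - g i) = rsum m f - rsum m g.
Proof. induction m; simpl; [ring| rewrite IHm; ring]. Qed.

Lemma zsq_nonneg n p : 0 <= zsq n p.
Proof. unfold zsq; apply rsum_nonneg; intros; nra. Qed.

Lemma rsum_zero m f i : (forall j, 0 <= f j) -> rsum m f = 0 -> (i < m)%nat -> f i = 0.
Proof. intros H0 H Hi. pose proof (rsum_ge m f i H0 Hi). specialize (H0 i). lra. Qed.

Lemma Hstar_Q n p : Hstar n p -> zsq n p ^ 2 + ptt p ^ 2 > 0.
Proof.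
  intros [Hin Hne].
  pose proof (zsq_nonneg n p).
  destruct (Rle_lt_dec (zsq n p ^ 2 + ptt p ^ 2) 0) as [Hle|]; [|lra].
  exfalso; apply Hne.
  assert (Hz : zsq n p = 0) by nra. assert (Ht : ptt p = 0) by nra.
  assert (Hi : forall i, px p i = 0 /\ py p i = 0).
  { intros i. destruct (Compare_dec.lt_dec i n) as [Hl|Hl].
    pose proof (rsum_zero n (fun i => px p i ^ 2 + py p i ^ 2) i ltac:(intros; nra) Hz Hl). cbv beta in H0. split; nra.
    apply Hin; lia. }
  destruct p as [x y t]; unfold origin; simpl in *. f_equal; try (apply functional_extensionality; intros i; apply Hi). auto.
Qed.

Lemma rho_pos n p : Hstar n p -> rho n p > 0.
Proof. intros H; unfold rho; apply sqrt_lt_R0, sqrt_lt_R0, Hstar_Q; auto. Qed.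

Lemma rho_sq n p : Hstar n p -> rho n p ^ 2 = sqrt (zsq n p ^ 2 + ptt p ^ 2).
Proof. intros H; unfold rho. rewrite pow2_sqrt; auto. apply sqrt_pos. Qed.

Lemma pt_ext p q : px p = px q -> py p = py q -> ptt p = ptt q -> p = q.
Proof. destruct p, q; simpl; intros -> -> ->; auto. Qed.

Lemma dil_dil a b p : dil a (dil b p) = dil (a * b) p.
Proof. destruct p; unfold dil; simpl; f_equal; try (apply functional_extensionality; intro); ring. Qed.
Lemma dil_1 p : dil 1 p = p.
Proof. destruct p; unfold dil; simpl; f_equal; try (apply functional_extensionality; intro); ring. Qed.
Lemma dil_origin a : dil a origin = origin.
Proof. unfold dil, origin; simpl; f_equal; try (apply functional_extensionality; intro); ring. Qed.

Lemma dil_Hstar n a p : a <> 0 -> Hstar n p -> Hstar n (dil a p).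
Proof.
  intros Ha [Hin Hne]; split.
  intros i Hi; simpl; destruct (Hin i Hi) as [-> ->]; split; ring.
  intros E. apply Hne. rewrite <- (dil_1 p), <- (Rinv_l a Ha), <- dil_dil, E, dil_origin; auto.
Qed.

Lemma dil_dmap n a p v w : has_dmap n (dil a) p v w ->
  (forall i, (i < n)%nat -> px w i = a * px v i /\ py w i = a * py v i) /\ ptt w = a ^ 2 * ptt v.
Proof.
  intros [Hw Hd]. split.
  intros i Hi. split.
  apply (dd_unique (fun q => a * px q i) p v). apply (Hd (CX i) Hi). apply dd_scal, dd_px.
  apply (dd_unique (fun q => a * py q i) p v). apply (Hd (CY i) Hi). apply dd_scal, dd_py.
  apply (dd_unique (fun q => a ^ 2 * ptt q) p v). apply (Hd CT I). apply dd_scal, dd_pt.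
Qed.

Lemma Theta_dil n a p v w : has_dmap n (dil a) p v w -> Theta n (dil a p) w = a ^ 2 * Theta n p v.
Proof.
  intros H; destruct (dil_dmap _ _ _ _ _ H) as [Hi Ht].
  unfold Theta; simpl.
  rewrite (rsum_ext n _ (fun i => a^2 * (px p i * py v i - py p i * px v i))).
  rewrite rsum_scal, Ht; ring.
  intros i Hl; destruct (Hi i Hl) as [-> ->]; ring.
Qed.

Lemma zsq_dil n a p : zsq n (dil a p) = a ^ 2 * zsq n p.
Proof.
  unfold zsq; simpl. rewrite <- rsum_scal. apply rsum_ext; intros; ring.
Qed.

Lemma rho_dil n a p : a > 0 -> rho n (dil a p) = a * rho n p.
Proof.
  intros Ha. unfold rho. rewrite zsq_dil. change (ptt (dil a p)) with (a^2 * ptt p).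
  replace ((a ^ 2 * zsq n p) ^ 2 + (a ^ 2 * ptt p) ^ 2) with ((a^2)^2 * (zsq n p ^ 2 + ptt p ^ 2)) by ring.
  rewrite sqrt_mult_alt, sqrt_pow2 by nra. rewrite sqrt_mult_alt, sqrt_pow2; nra.
Qed.

Lemma dil_part n a : a > 0 -> CR_aut n (dil a) /\ preserves_form n (dil a).
Proof.
  intros Ha. split; [split|].
  - exists (dil (/ a)). split; [|split; [|split; [|split; [|split]]]].
    + intros p Hp; apply dil_Hstar; auto; lra.
    + intros p Hp; apply dil_Hstar; auto. apply Rinv_neq_0_compat; lra.
    + intros p _; rewrite dil_dil, Rinv_l, dil_1; auto; lra.
    + intros p _; rewrite dil_dil, Rinv_r, dil_1; auto; lra.
    + intros c Hc k. destruct c; simpl.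
      apply (Ck_mult n k _ (fun _ => a) (fun q => coord q (CX i))); [apply Ck_const|apply Ck_coord; auto].
      apply (Ck_mult n k _ (fun _ => a) (fun q => coord q (CY i))); [apply Ck_const|apply Ck_coord; auto].
      apply (Ck_mult n k _ (fun _ => a^2) (fun q => coord q CT)); [apply Ck_const|apply Ck_coord; auto].
    + intros c Hc k. destruct c; simpl.
      apply (Ck_mult n k _ (fun _ => /a) (fun q => coord q (CX i))); [apply Ck_const|apply Ck_coord; auto].
      apply (Ck_mult n k _ (fun _ => /a) (fun q => coord q (CY i))); [apply Ck_const|apply Ck_coord; auto].
      apply (Ck_mult n k _ (fun _ => (/a)^2) (fun q => coord q CT)); [apply Ck_const|apply Ck_coord; auto].
  - intros p v w Hp Hv Th Hd. split.
    rewrite (Theta_dil _ _ _ _ _ Hd), Th; ring.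
    intros w' Hd'.
    destruct (dil_dmap _ _ _ _ _ Hd) as [Hi Ht].
    destruct (dil_dmap _ _ _ _ _ Hd') as [Hi' Ht'].
    destruct Hd as [Hw _]. destruct Hd' as [Hw' _].
    apply pt_ext; unfold Jmap; simpl.
    + apply functional_extensionality; intros i. destruct (Compare_dec.lt_dec i n) as [Hl|Hl].
      destruct (Hi i Hl) as [_ ->]. destruct (Hi' i Hl) as [-> _]. simpl. ring.
      destruct (Hw' i ltac:(lia)) as [-> _]. destruct (Hw i ltac:(lia)) as [_ ->]. ring.
    + apply functional_extensionality; intros i. destruct (Compare_dec.lt_dec i n) as [Hl|Hl].
      destruct (Hi i Hl) as [-> _]. destruct (Hi' i Hl) as [_ ->]. simpl. ring.
      destruct (Hw' i ltac:(lia)) as [_ ->]. destruct (Hw i ltac:(lia)) as [-> _]. ring.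
    + rewrite Ht'. simpl.
      rewrite (rsum_ext n (fun i => a * px p i * px w i + a * py p i * py w i) (fun i => (a*a) * (px p i * px v i + py p i * py v i))).
      rewrite rsum_scal; ring.
      intros i Hl. destruct (Hi i Hl) as [-> ->]. ring.
  - intros p v w Hp Hv Hd.
    rewrite (Theta_dil _ _ _ _ _ Hd), rho_dil by auto.
    pose proof (rho_pos n p Hp). field; split; lra.
Qed.

Lemma Ck_ext n k U f g : (forall q, f q = g q) -> Ck n k U f -> Ck n k U g.
Proof. intros H. replace g with f; auto. apply functional_extensionality; auto. Qed.

Lemma dd_sq f p v a : has_dderiv f p v a -> has_dderiv (fun q => f q ^ 2) p v (2 * f p * a).
Proof. intros H. eapply dd_ext; [|eapply dd_eq; [|apply (dd_mult f f); eauto]]. intros; simpl; ring. ring. Qed.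

Definition Wf n q := ptt q ^ 2 + zsq n q ^ 2.
Definition sd n p v := 2 * rsum n (fun i => px p i * px v i + py p i * py v i).
Definition Wd n p v := 2 * ptt p * ptt v + 2 * zsq n p * sd n p v.

Lemma dd_zsq n p v : has_dderiv (zsq n) p v (sd n p v).
Proof.
  unfold zsq, sd. rewrite <- rsum_scal.
  apply (dd_rsum n (fun i q => px q i ^ 2 + py q i ^ 2)).
  intros i _. eapply dd_eq; [|apply dd_plus; apply dd_sq; [apply dd_px|apply dd_py]]. cbv beta; ring.
Qed.

Lemma dd_W n p v : has_dderiv (Wf n) p v (Wd n p v).
Proof.
  unfold Wf, Wd. apply (dd_plus (fun q => ptt q ^ 2) (fun q => zsq n q ^ 2)); apply dd_sq; [apply dd_pt|apply dd_zsq].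
Qed.

Lemma Ck_zsq n k U : Ck n k U (zsq n).
Proof.
  unfold zsq. apply (Ck_rsum n k U n (fun i q => px q i ^ 2 + py q i ^ 2)).
  intros i Hi. apply Ck_plus.
  apply (Ck_ext _ _ _ (fun q => coord q (CX i) * coord q (CX i))); [intros; simpl; ring|].
  apply Ck_mult; apply Ck_coord; simpl; auto.
  apply (Ck_ext _ _ _ (fun q => coord q (CY i) * coord q (CY i))); [intros; simpl; ring|].
  apply Ck_mult; apply Ck_coord; simpl; auto.
Qed.

Lemma Ck_W n k U : Ck n k U (Wf n).
Proof.
  unfold Wf. apply Ck_plus.
  apply (Ck_ext _ _ _ (fun q => coord q CT * coord q CT)); [intros; simpl; ring|].
  apply Ck_mult; apply (Ck_coord n k U CT); exact I.
  apply (Ck_ext _ _ _ (fun q => zsq n q * zsq n q)); [intros; simpl; ring|].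
  apply Ck_mult; apply Ck_zsq.
Qed.

Lemma W_pos n p : Hstar n p -> Wf n p > 0.
Proof. intros H; pose proof (Hstar_Q n p H); unfold Wf; lra. Qed.

Lemma crx_eq n q i : px (cr_inv n q) i = (px q i * ptt q + py q i * zsq n q) * / Wf n q.
Proof. reflexivity. Qed.
Lemma cry_eq n q i : py (cr_inv n q) i = (py q i * ptt q - px q i * zsq n q) * / Wf n q.
Proof. reflexivity. Qed.
Lemma crt_eq n q : ptt (cr_inv n q) = - ptt q * / Wf n q.
Proof. reflexivity. Qed.

Definition dxF n p v i := 
  ((px v i * ptt p + px p i * ptt v + py v i * zsq n p + py p i * sd n p v) * Wf n p
    - (px p i * ptt p + py p i * zsq n p) * Wd n p v) / Wf n p ^ 2.
Definition dyF n p v i := 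
  ((py v i * ptt p + py p i * ptt v - px v i * zsq n p - px p i * sd n p v) * Wf n p
    - (py p i * ptt p - px p i * zsq n p) * Wd n p v) / Wf n p ^ 2.
Definition dtF n p v := (- ptt v * Wf n p + ptt p * Wd n p v) / Wf n p ^ 2.

Lemma dd_crx n p v i : Hstar n p -> has_dderiv (fun q => px (cr_inv n q) i) p v (dxF n p v i).
Proof.
  intros Hp. pose proof (W_pos n p Hp).
  apply dd_ext with (fun q => (px q i * ptt q + py q i * zsq n q) * / Wf n q); [intros; reflexivity|].
  eapply dd_eq; [| apply dd_mult; [apply dd_plus; apply dd_mult; [apply dd_px|apply dd_pt|apply dd_py|apply dd_zsq]
     | apply dd_inv; [lra|apply dd_W]]].
  unfold dxF; cbv beta; field; lra.
Qed.
Lemma dd_cry n p v i : Hstar n p -> has_dderiv (fun q => py (cr_inv n q) i) p v (dyF n p v i).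
Proof.
  intros Hp. pose proof (W_pos n p Hp).
  apply dd_ext with (fun q => (py q i * ptt q + (-1) * (px q i * zsq n q)) * / Wf n q); [intros; rewrite cry_eq; ring|].
  eapply dd_eq; [| apply dd_mult; [apply dd_plus; [apply dd_mult; [apply dd_py|apply dd_pt]| apply dd_scal; apply dd_mult; [apply dd_px|apply dd_zsq]]
     | apply dd_inv; [lra|apply dd_W]]].
  unfold dyF; cbv beta; field; lra.
Qed.
Lemma dd_crt n p v : Hstar n p -> has_dderiv (fun q => ptt (cr_inv n q)) p v (dtF n p v).
Proof.
  intros Hp. pose proof (W_pos n p Hp).
  apply dd_ext with (fun q => ((-1) * ptt q) * / Wf n q); [intros; rewrite crt_eq; ring|].
  eapply dd_eq; [| apply dd_mult; [apply dd_scal, dd_pt | apply dd_inv; [lra|apply dd_W]]].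
  unfold dtF; cbv beta; field; lra.
Qed.

Lemma cr_dmap n p v w : Hstar n p -> has_dmap n (cr_inv n) p v w ->
  (forall i, (i < n)%nat -> px w i = dxF n p v i /\ py w i = dyF n p v i) /\ ptt w = dtF n p v.
Proof.
  intros Hp [Hw Hd]. split.
  intros i Hi. split.
  apply (dd_unique (fun q => px (cr_inv n q) i) p v). apply (Hd (CX i) Hi). apply dd_crx; auto.
  apply (dd_unique (fun q => py (cr_inv n q) i) p v). apply (Hd (CY i) Hi). apply dd_cry; auto.
  apply (dd_unique (fun q => ptt (cr_inv n q)) p v). apply (Hd CT I). apply dd_crt; auto.
Qed.

Lemma Theta_cr n p v w : Hstar n p -> has_dmap n (cr_inv n) p v w ->
  Theta n (cr_inv n p) w = Theta n p v / Wf n p.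
Proof.
  intros Hp Hd. pose proof (W_pos n p Hp) as HW.
  destruct (cr_dmap n p v w Hp Hd) as [Hi Ht].
  unfold Theta. rewrite Ht.
  rewrite (rsum_ext n _ (fun i => / Wf n p ^ 2 * (Wf n p * (px p i * py v i - py p i * px v i)
        + (zsq n p * ptt v - ptt p * sd n p v) * (px p i ^ 2 + py p i ^ 2)))).
  2:{ intros i Hl; destruct (Hi i Hl) as [-> ->]; rewrite crx_eq, cry_eq; unfold dxF, dyF, Wd.
      unfold Wf in *. field. lra. }
  rewrite rsum_scal, rsum_plus, !rsum_scal.
  change (rsum n (fun i => px p i ^ 2 + py p i ^ 2)) with (zsq n p).
  unfold dtF, Wd. unfold Wf in *. field. lra.
Qed.

Lemma sdJ n p v : Theta n p v = 0 -> sd n p (Jmap n p v) = ptt v.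
Proof.
  unfold Theta, sd; intros H. simpl.
  rewrite (rsum_ext n _ (fun i => -1 * (px p i * py v i - py p i * px v i))).
  rewrite rsum_scal. lra. intros; ring.
Qed.
Lemma ptJ n p v : ptt (Jmap n p v) = - sd n p v.
Proof. unfold sd; simpl; ring. Qed.

Lemma J_cr n p v w w' : Hstar n p -> Theta n p v = 0 ->
  has_dmap n (cr_inv n) p v w -> has_dmap n (cr_inv n) p (Jmap n p v) w' ->
  w' = Jmap n (cr_inv n p) w.
Proof.
  intros Hp Th Hd Hd'. pose proof (W_pos n p Hp) as HW.
  destruct (cr_dmap n p v w Hp Hd) as [Hi Ht].
  destruct (cr_dmap n p _ w' Hp Hd') as [Hi' Ht'].
  destruct Hd as [Hw _]. destruct Hd' as [Hw' _].
  apply pt_ext.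
  - apply functional_extensionality; intros i. simpl. destruct (Compare_dec.lt_dec i n) as [Hl|Hl].
    destruct (Hi i Hl) as [_ ->]. destruct (Hi' i Hl) as [-> _].
    unfold dxF, dyF, Wd. rewrite (sdJ n p v Th), ptJ. simpl. unfold Wf in *. field. lra.
    destruct (Hw' i ltac:(lia)) as [-> _]. destruct (Hw i ltac:(lia)) as [_ ->]. ring.
  - apply functional_extensionality; intros i. simpl. destruct (Compare_dec.lt_dec i n) as [Hl|Hl].
    destruct (Hi i Hl) as [-> _]. destruct (Hi' i Hl) as [_ ->].
    unfold dxF, dyF, Wd. rewrite (sdJ n p v Th), ptJ. simpl. unfold Wf in *. field. lra.
    destruct (Hw' i ltac:(lia)) as [_ ->]. destruct (Hw i ltac:(lia)) as [-> _]. ring.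
  - rewrite Ht'. simpl.
    rewrite (rsum_ext n _ (fun i => / Wf n p * (px p i * px v i + py p i * py v i)
        + (- (ptt p * ptt v + zsq n p * sd n p v) / Wf n p ^ 2) * (px p i ^ 2 + py p i ^ 2))).
    2:{ intros i Hl; destruct (Hi i Hl) as [-> ->]; try rewrite crx_eq, cry_eq; unfold dxF, dyF, Wd.
        unfold Wf in *. field. lra. }
    rewrite rsum_plus, !rsum_scal.
    change (rsum n (fun i => px p i ^ 2 + py p i ^ 2)) with (zsq n p).
    unfold dtF, Wd. rewrite (sdJ n p v Th), ptJ. unfold sd. unfold Wf in *. field. lra.
Qed.

Definition negz (q : pt) : pt := mkpt (fun i => - px q i) (fun i => - py q i) (ptt q).

Lemma px_negz q i : px (negz q) i = - px q i. Proof. reflexivity. Qed.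
Lemma py_negz q i : py (negz q) i = - py q i. Proof. reflexivity. Qed.
Lemma pt_negz q : ptt (negz q) = ptt q. Proof. reflexivity. Qed.

Lemma zsq_cr n p : Wf n p <> 0 -> zsq n (cr_inv n p) = zsq n p / Wf n p.
Proof.
  intros HW. unfold zsq at 1.
  rewrite (rsum_ext n _ (fun i => / Wf n p * (px p i ^ 2 + py p i ^ 2))).
  rewrite rsum_scal. unfold zsq, Rdiv. ring.
  intros i _. rewrite crx_eq, cry_eq. unfold Wf in *. field; auto.
Qed.

Lemma Wf_cr n p : Wf n p <> 0 -> Wf n (cr_inv n p) = / Wf n p.
Proof.
  intros HW. unfold Wf at 1. rewrite zsq_cr, crt_eq by auto. unfold Wf in *. field; auto.
Qed.

Lemma crcr n p : Wf n p <> 0 -> cr_inv n (cr_inv n p) = negz p.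
Proof.
  intros HW. assert (HW' : Wf n p > 0 \/ Wf n p < 0) by lra.
  apply pt_ext; [apply functional_extensionality; intros i| apply functional_extensionality; intros i|]; simpl negz.
  - rewrite crx_eq, Wf_cr, zsq_cr, crt_eq, crx_eq, cry_eq by auto. cbv beta. rewrite px_negz. unfold Wf in *. field; auto.
  - rewrite cry_eq, Wf_cr, zsq_cr, crt_eq, crx_eq, cry_eq by auto. cbv beta. rewrite py_negz. unfold Wf in *. field; auto.
  - rewrite crt_eq, Wf_cr, crt_eq by auto. rewrite pt_negz. field; auto.
Qed.

Lemma zsq_negz n q : zsq n (negz q) = zsq n q.
Proof. unfold zsq; apply rsum_ext; intros; simpl; ring. Qed.
Lemma Wf_negz n q : Wf n (negz q) = Wf n q.
Proof. unfold Wf; rewrite zsq_negz; simpl; ring. Qed.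

Lemma cr_negz n q : cr_inv n (negz q) = negz (cr_inv n q).
Proof.
  apply pt_ext; [apply functional_extensionality; intros i| apply functional_extensionality; intros i|]; simpl negz.
  - rewrite px_negz, !crx_eq, Wf_negz, zsq_negz, px_negz, py_negz, pt_negz. ring.
  - rewrite py_negz, !cry_eq, Wf_negz, zsq_negz, px_negz, py_negz, pt_negz. ring.
  - rewrite pt_negz, !crt_eq, Wf_negz, pt_negz. ring.
Qed.

Lemma negz_negz q : negz (negz q) = q.
Proof. destruct q; unfold negz; simpl; f_equal; apply functional_extensionality; intros; ring. Qed.

Lemma zsq_origin n : zsq n origin = 0.
Proof. unfold zsq; rewrite (rsum_ext n _ (fun i => 0 * 0)). rewrite rsum_scal; ring. intros; simpl; ring. Qed.

Lemma Hstar_of n p : in_H n p -> Wf n p > 0 -> Hstar n p.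
Proof. intros H1 H2; split; auto. intros ->. unfold Wf in H2. rewrite zsq_origin in H2. simpl in H2. lra. Qed.

Lemma negz_Hstar n p : Hstar n p -> Hstar n (negz p).
Proof.
  intros Hp. pose proof (W_pos n p Hp). destruct Hp as [Hin _]. apply Hstar_of.
  intros i Hi; simpl; destruct (Hin i Hi) as [-> ->]; split; ring.
  rewrite Wf_negz; auto.
Qed.

Lemma cr_Hstar n p : Hstar n p -> Hstar n (cr_inv n p).
Proof.
  intros Hp. pose proof (W_pos n p Hp). destruct Hp as [Hin _]. apply Hstar_of.
  intros i Hi; rewrite crx_eq, cry_eq; destruct (Hin i Hi) as [-> ->]; split; ring.
  rewrite Wf_cr by lra. apply Rinv_0_lt_compat; auto.
Qed.

Lemma Ck_crx n k i : (i < n)%nat -> Ck n k (Hstar n) (fun q => px (cr_inv n q) i).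
Proof.
  intros Hi. apply (Ck_ext _ _ _ (fun q => ((coord q (CX i) * coord q CT) + (coord q (CY i) * zsq n q)) * / Wf n q)); [intros; reflexivity|].
  apply Ck_mult. apply Ck_plus; apply Ck_mult; try apply Ck_coord; try apply Ck_zsq; simpl; auto.
  apply Ck_inv. intros q Hq; pose proof (W_pos n q Hq); lra. apply Ck_W.
Qed.
Lemma Ck_cry n k i : (i < n)%nat -> Ck n k (Hstar n) (fun q => py (cr_inv n q) i).
Proof.
  intros Hi. apply (Ck_ext _ _ _ (fun q => ((coord q (CY i) * coord q CT) + ((fun _ => -1) q * (coord q (CX i) * zsq n q))) * / Wf n q)); [intros; rewrite cry_eq; simpl; ring|].
  apply Ck_mult. apply Ck_plus. apply Ck_mult; apply Ck_coord; simpl; auto.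
  apply Ck_mult. apply Ck_const. apply Ck_mult; [apply Ck_coord; simpl; auto|apply Ck_zsq].
  apply Ck_inv. intros q Hq; pose proof (W_pos n q Hq); lra. apply Ck_W.
Qed.
Lemma Ck_crt n k : Ck n k (Hstar n) (fun q => ptt (cr_inv n q)).
Proof.
  apply (Ck_ext _ _ _ (fun q => ((fun _ => -1) q * coord q CT) * / Wf n q)); [intros; rewrite crt_eq; simpl; ring|].
  apply Ck_mult. apply Ck_mult. apply Ck_const. apply Ck_coord; simpl; auto.
  apply Ck_inv. intros q Hq; pose proof (W_pos n q Hq); lra. apply Ck_W.
Qed.

Lemma rho_cr_sq n p : Hstar n p -> rho n (cr_inv n p) ^ 2 = / sqrt (Wf n p).
Proof.
  intros Hp. pose proof (W_pos n p Hp).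
  rewrite rho_sq by (apply cr_Hstar; auto).
  replace (zsq n (cr_inv n p) ^ 2 + ptt (cr_inv n p) ^ 2) with (Wf n (cr_inv n p)) by (unfold Wf; ring).
  rewrite Wf_cr by lra. apply sqrt_inv.
Qed.

Lemma cr_part n : CR_aut n (cr_inv n) /\ preserves_form n (cr_inv n).
Proof.
  split; [split|].
  - exists (fun q => negz (cr_inv n q)). split; [|split; [|split; [|split; [|split]]]].
    + apply cr_Hstar.
    + intros p Hp; apply negz_Hstar, cr_Hstar; auto.
    + intros p Hp. pose proof (W_pos n p Hp). rewrite crcr, negz_negz; auto; lra.
    + intros p Hp. pose proof (W_pos n p Hp). rewrite cr_negz, crcr, negz_negz; auto; lra.
    + intros c Hc k. destruct c; simpl in *. apply Ck_crx; auto. apply Ck_cry; auto. apply Ck_crt.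
    + intros c Hc k. destruct c; simpl in Hc.
      apply (Ck_ext _ _ _ (fun q => (fun _ => -1) q * px (cr_inv n q) i)); [intros; unfold coord; rewrite px_negz; ring|]. apply Ck_mult; [apply Ck_const|apply Ck_crx; auto].
      apply (Ck_ext _ _ _ (fun q => (fun _ => -1) q * py (cr_inv n q) i)); [intros; unfold coord; rewrite py_negz; ring|]. apply Ck_mult; [apply Ck_const|apply Ck_cry; auto].
      apply Ck_crt.
  - intros p v w Hp Hv Th Hd. split.
    rewrite (Theta_cr n p v w Hp Hd), Th. unfold Rdiv; ring.
    intros w' Hd'. apply (J_cr n p v w w'); auto.
  - intros p v w Hp Hv Hd.
    rewrite (Theta_cr n p v w Hp Hd), rho_cr_sq, rho_sq by auto.
    pose proof (W_pos n p Hp).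
    replace (zsq n p ^ 2 + ptt p ^ 2) with (Wf n p) by (unfold Wf; ring).
    assert (Hs : sqrt (Wf n p) > 0) by (apply sqrt_lt_R0; auto).
    pose proof (pow2_sqrt (Wf n p) ltac:(lra)).
    rewrite <- H0 at 1. field. lra.
Qed.

Lemma dpl_rk k x : x > 0 ->
  derivable_pt_lim (fun y => / sqrt (sqrt y) ^ k) x (- INR k / (4 * sqrt (sqrt x) ^ (k + 4))).
Proof.
  intros Hx.
  assert (Hs : sqrt x > 0) by (apply sqrt_lt_R0; auto).
  assert (Hr : sqrt (sqrt x) > 0) by (apply sqrt_lt_R0; auto).
  set (r := sqrt (sqrt x)) in *.
  assert (Hsr : sqrt x = r ^ 2) by (unfold r; rewrite pow2_sqrt; lra).
  pose proof (derivable_pt_lim_comp sqrt sqrt x _ _ (derivable_pt_lim_sqrt x Hx)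
     (derivable_pt_lim_sqrt (sqrt x) Hs)) as H1.
  assert (Hrk : r ^ k <> 0) by (apply pow_nonzero; lra).
  pose proof (derivable_pt_lim_div (fct_cte 1) (fun y => y ^ k) r _ _ (derivable_pt_lim_const 1 r)
     (derivable_pt_lim_pow r k) Hrk) as H2.
  pose proof (derivable_pt_lim_comp (comp sqrt sqrt) (fct_cte 1 / (fun y => y ^ k))%F x _ _ H1 H2) as H3.
  eapply dpl_ext; [|eapply dpl_eq; [|apply H3]].
  intros y. unfold comp, div_fct, fct_cte. unfold Rdiv; ring.
  fold r. rewrite Hsr. unfold fct_cte. unfold Rsqr.
  destruct k as [|m]. simpl. field. lra.
  replace (S m + 4)%nat with (m + 5)%nat by lia. rewrite pow_add.
  simpl Init.Nat.pred. assert (r ^ m <> 0) by (apply pow_nonzero; lra).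
  rewrite S_INR. simpl. field. split; lra.
Qed.

Definition Qf n q := zsq n q ^ 2 + ptt q ^ 2.
Definition Qd n p v := 2 * zsq n p * sd n p v + 2 * ptt p * ptt v.

Lemma dd_Q n p v : has_dderiv (Qf n) p v (Qd n p v).
Proof.
  unfold Qf, Qd. apply (dd_plus (fun q => zsq n q ^ 2) (fun q => ptt q ^ 2)); apply dd_sq; [apply dd_zsq|apply dd_pt].
Qed.

Lemma dd_rk n k p v : Hstar n p ->
  has_dderiv (fun q => / rho n q ^ k) p v (- INR k / (4 * rho n p ^ (k + 4)) * Qd n p v).
Proof.
  intros Hp. pose proof (Hstar_Q n p Hp) as HQ.
  pose proof (dd_Q n p v) as D. unfold has_dderiv in *.
  assert (HQ' : Qf n (padd p (pscale 0 v)) > 0) by (rewrite padd0; unfold Qf; auto).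
  pose proof (derivable_pt_lim_comp _ _ 0 _ _ D (dpl_rk k _ HQ')) as H.
  rewrite padd0 in H. unfold comp in H.
  eapply dpl_ext; [|apply H]. intros; reflexivity.
Qed.

Lemma rsum_zeros m : rsum m (fun _ => 0) = 0.
Proof. induction m; simpl; [|rewrite IHm]; ring. Qed.

Lemma rsum_delta m a f : (a < m)%nat -> rsum m (fun i => if Nat.eqb i a then f i else 0) = f a.
Proof.
  induction m; intros Ha; [lia|]. simpl.
  destruct (Nat.eq_dec a m) as [->|Hne].
  rewrite Nat.eqb_refl. rewrite (rsum_ext m _ (fun _ => 0)). rewrite rsum_zeros; ring.
  intros i Hi. destruct (Nat.eqb_spec i m); [lia|auto].
  rewrite IHm by lia. destruct (Nat.eqb_spec m a); [lia|ring].
Qed.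

Lemma sd_X n q a : (a < n)%nat -> sd n q (Xv q a) = 2 * px q a.
Proof.
  intros Ha; unfold sd. rewrite (rsum_ext n _ (fun i => if Nat.eqb i a then px q i else 0)).
  rewrite rsum_delta; auto.
  intros i _. unfold Xv, padd, pscale, ebasis; simpl. destruct (Nat.eqb i a); ring.
Qed.
Lemma sd_Y n q a : (a < n)%nat -> sd n q (Yv q a) = 2 * py q a.
Proof.
  intros Ha; unfold sd. rewrite (rsum_ext n _ (fun i => if Nat.eqb i a then py q i else 0)).
  rewrite rsum_delta; auto.
  intros i _. unfold Yv, padd, pscale, ebasis; simpl. destruct (Nat.eqb i a); ring.
Qed.
Lemma Xv_x q a : px (Xv q a) a = 1.
Proof. unfold Xv, padd, pscale, ebasis; simpl. rewrite Nat.eqb_refl; ring. Qed.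
Lemma Xv_y q a : py (Xv q a) a = 0.
Proof. unfold Xv, padd, pscale, ebasis; simpl. ring. Qed.
Lemma Xv_t q a : ptt (Xv q a) = 2 * py q a.
Proof. unfold Xv, padd, pscale, ebasis; simpl. ring. Qed.
Lemma Yv_x q a : px (Yv q a) a = 0.
Proof. unfold Yv, padd, pscale, ebasis; simpl. ring. Qed.
Lemma Yv_y q a : py (Yv q a) a = 1.
Proof. unfold Yv, padd, pscale, ebasis; simpl. rewrite Nat.eqb_refl; ring. Qed.
Lemma Yv_t q a : ptt (Yv q a) = -2 * px q a.
Proof. unfold Yv, padd, pscale, ebasis; simpl. ring. Qed.

Definition gx n a q := - INR n * (zsq n q * px q a + ptt q * py q a) * / rho n q ^ (n + 4).
Definition gy n a q := - INR n * (zsq n q * py q a - ptt q * px q a) * / rho n q ^ (n + 4).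
Definition hx n a p := - INR n * ((2 * px p a * px p a + zsq n p + 2 * py p a * py p a) * / rho n p ^ (n + 4)
   + (zsq n p * px p a + ptt p * py p a) * (- INR (n + 4) / (4 * rho n p ^ (n + 4 + 4)) * (4 * (zsq n p * px p a + ptt p * py p a)))).
Definition hy n a p := - INR n * ((2 * py p a * py p a + zsq n p + 2 * px p a * px p a) * / rho n p ^ (n + 4)
   + (zsq n p * py p a - ptt p * px p a) * (- INR (n + 4) / (4 * rho n p ^ (n + 4 + 4)) * (4 * (zsq n p * py p a - ptt p * px p a)))).

Lemma dgx n a p : (a < n)%nat -> Hstar n p -> has_dderiv (fun q => / rho n q ^ n) p (Xv p a) (gx n a p).
Proof.
  intros Ha Hp. pose proof (rho_pos n p Hp).
  eapply dd_eq; [|apply dd_rk; auto]. unfold Qd, gx. rewrite sd_X, Xv_t by auto.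
  assert (rho n p ^ (n + 4) <> 0) by (apply pow_nonzero; lra). field; auto.
Qed.
Lemma dgy n a p : (a < n)%nat -> Hstar n p -> has_dderiv (fun q => / rho n q ^ n) p (Yv p a) (gy n a p).
Proof.
  intros Ha Hp. pose proof (rho_pos n p Hp).
  eapply dd_eq; [|apply dd_rk; auto]. unfold Qd, gy. rewrite sd_Y, Yv_t by auto.
  assert (rho n p ^ (n + 4) <> 0) by (apply pow_nonzero; lra). field; auto.
Qed.

Lemma dhx n a p : (a < n)%nat -> Hstar n p -> has_dderiv (gx n a) p (Xv p a) (hx n a p).
Proof.
  intros Ha Hp. pose proof (rho_pos n p Hp). unfold gx.
  eapply dd_eq; [|apply dd_mult; [apply dd_scal; apply dd_plus; apply dd_mult; [apply dd_zsq|apply dd_px|apply dd_pt|apply dd_py]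
     | apply dd_rk; auto]].
  unfold hx, Qd. rewrite sd_X, Xv_t, Xv_x, Xv_y by auto. ring.
Qed.
Lemma dhy n a p : (a < n)%nat -> Hstar n p -> has_dderiv (gy n a) p (Yv p a) (hy n a p).
Proof.
  intros Ha Hp. pose proof (rho_pos n p Hp). unfold gy.
  apply dd_ext with (fun q => - INR n * (zsq n q * py q a + (-1) * (ptt q * px q a)) * / rho n q ^ (n + 4)); [intros; ring|].
  eapply dd_eq; [|apply dd_mult; [apply dd_scal; apply dd_plus; [apply dd_mult; [apply dd_zsq|apply dd_py]|apply dd_scal; apply dd_mult; [apply dd_pt|apply dd_px]]
     | apply dd_rk; auto]].
  unfold hy, Qd. rewrite sd_Y, Yv_t, Yv_x, Yv_y by auto. ring.
Qed.

Lemma rsum_const m c : rsum m (fun _ => c) = INR m * c.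
Proof. induction m; simpl rsum; [simpl; ring|]. rewrite IHm, S_INR; ring. Qed.

Lemma rho4 n p : Hstar n p -> rho n p ^ 4 = zsq n p ^ 2 + ptt p ^ 2.
Proof.
  intros Hp. replace (rho n p ^ 4) with ((rho n p ^ 2) ^ 2) by ring.
  rewrite rho_sq, pow2_sqrt; auto. pose proof (Hstar_Q n p Hp); lra.
Qed.

Lemma sum_h n p : Hstar n p ->
  rsum n (fun a => hx n a p + hy n a p) = - INR n ^ 2 * zsq n p / rho n p ^ (n + 4).
Proof.
  intros Hp. pose proof (rho_pos n p Hp). pose proof (Hstar_Q n p Hp).
  assert (HR : rho n p ^ (n + 4) <> 0) by (apply pow_nonzero; lra).
  rewrite (rsum_ext n _ (fun a => (-2 * INR n * zsq n p / rho n p ^ (n + 4))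
       + (INR n ^ 2 / rho n p ^ (n + 4)) * (px p a ^ 2 + py p a ^ 2))).
  rewrite rsum_plus, rsum_const, rsum_scal. change (rsum n (fun a => px p a ^ 2 + py p a ^ 2)) with (zsq n p).
  field; auto.
  intros a _. unfold hx, hy.
  rewrite (pow_add _ (n + 4) 4), rho4 by auto.
  rewrite plus_INR. simpl (INR 4). field. split; lra.
Qed.

Lemma Rpower_rho n r : (1 <= n)%nat -> r > 0 -> Rpower (/ r ^ n) ((INR n + 2) / INR n) = / r ^ (n + 2).
Proof.
  intros Hn Hr. assert (INR n > 0) by (apply lt_0_INR; lia).
  unfold Rpower. rewrite ln_Rinv, ln_pow by (try apply pow_lt; auto).
  replace ((INR n + 2) / INR n * - (INR n * ln r)) with (- (INR (n + 2) * ln r))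
    by (rewrite plus_INR; simpl (INR 2); field; lra).
  rewrite exp_Ropp. f_equal. change (exp (INR (n + 2) * ln r)) with (Rpower r (INR (n + 2))).
  apply Rpower_pow; auto.
Qed.

Lemma tw_part n : (1 <= n)%nat ->
  let Rc := fun p => INR n * (INR n + 1) * zsq n p / (2 * rho n p ^ 2) in
   TW_scal_conf n (Hstar n) (fun p => / rho n p ^ n) Rc /\
   (forall p, Hstar n p -> Rc p >= 0) /\
   (forall p, Hstar n p ->
      (exists i, (i < n)%nat /\ (px p i <> 0 \/ py p i <> 0)) -> Rc p > 0).
Proof.
  intros Hn Rc. assert (HnR : INR n > 0) by (apply lt_0_INR; lia).
  split; [|split].
  - exists (fun p => / 4 * rsum n (fun a => hx n a p + hy n a p)). split.
    + exists (gx n), (gy n), (hx n), (hy n). intros p Hp. split; [|reflexivity].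
      intros a Ha. split; [|split; [|split]].
      apply dgx; auto. apply dgy; auto. apply dhx; auto. apply dhy; auto.
    + intros p Hp. pose proof (rho_pos n p Hp).
      rewrite sum_h, Rpower_rho by auto. unfold Rc.
      replace (rho n p ^ (n + 4)) with (rho n p ^ (n + 2) * rho n p ^ 2) by (rewrite <- pow_add; f_equal; lia).
      assert (rho n p ^ (n + 2) <> 0) by (apply pow_nonzero; lra).
      field. repeat split; auto; try lra; apply pow_nonzero; lra.
  - intros p Hp. pose proof (rho_pos n p Hp). pose proof (zsq_nonneg n p). unfold Rc.
    apply Rle_ge. apply Rmult_le_pos. apply Rmult_le_pos; [|auto]. apply Rmult_le_pos; lra.
    apply Rlt_le, Rinv_0_lt_compat. nra.
  - intros p Hp [i [Hi Hne]]. pose proof (rho_pos n p Hp). unfold Rc.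
    assert (zsq n p > 0).
    { pose proof (rsum_ge n (fun i => px p i ^ 2 + py p i ^ 2) i ltac:(intros; nra) Hi). cbv beta in H0.
      unfold zsq. destruct Hne; nra. }
    apply Rmult_lt_0_compat. apply Rmult_lt_0_compat; [apply Rmult_lt_0_compat; lra|auto].
    apply Rinv_0_lt_compat. nra.
Qed.

Theorem mainTheorem5 (n : nat) (hn : (1 <= n)%nat) :
  (forall a : R, a > 0 -> CR_aut n (dil a) /\ preserves_form n (dil a)) /\
  (CR_aut n (cr_inv n) /\ preserves_form n (cr_inv n)) /\
  (let Rc := fun p => INR n * (INR n + 1) * zsq n p / (2 * rho n p ^ 2) in
   TW_scal_conf n (Hstar n) (fun p => / rho n p ^ n) Rc /\
   (forall p, Hstar n p -> Rc p >= 0) /\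
   (forall p, Hstar n p ->
      (exists i, (i < n)%nat /\ (px p i <> 0 \/ py p i <> 0)) -> Rc p > 0)).
Proof.
  split; [intros; apply dil_part; auto|]. split; [apply cr_part|]. apply tw_part; auto.
Qed.
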